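(* Let $E$ be a normed space over $\mathbb{K}\in\{\mathbb{R},\mathbb{C}\}$, let $n\in\{1,2\}$, and let $P:E\to\mathbb{K}$ be an $n$-homogeneous polynomial (not assumed continuous). Then $P$ is continuous if and only if $P(C)$ is connected for every connected set $C\subset E$.
   Context: A map $P:E\to\mathbb{K}$ is an $n$-homogeneous polynomial if there is a symmetric $n$-linear mapping $L:E^n\to\mathbb{K}$ (not necessarily continuous) with $P(x)=L(x,\ldots,x)$ for all $x\in E$. *)

(* Defs.v *)
From mathcomp Require Import all_boot all_order all_algebra all_fingroup.
From mathcomp Require Import all_classical all_reals all_analysis.
From mathcomp Require Export complex.
Set Implicit Arguments. Unset Strict Implicit. Unset Printing Implicit Defensive.
Import GRing.Theory Num.Theory.
Local Open Scope ring_scope.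

Definition upd (E : Type) (n : nat) (x : 'I_n -> E) (i : 'I_n) (u : E) : 'I_n -> E :=
  fun j => if j == i then u else x j.

Definition multilinear (K : pzRingType) (E : lmodType K) (n : nat)
  (L : ('I_n -> E) -> K) : Prop :=
  forall (i : 'I_n) (x : 'I_n -> E) (a : K) (u v : E),
    L (upd x i (a *: u + v)) = a * L (upd x i u) + L (upd x i v).

Definition symmetric_form (E K : Type) (n : nat) (L : ('I_n -> E) -> K) : Prop :=
  forall (s : 'S_n) (x : 'I_n -> E), L (fun j => x (s j)) = L x.

Definition homogeneous_polynomial (K : pzRingType) (E : lmodType K) (n : nat)
  (P : E -> K) : Prop :=
  exists L : ('I_n -> E) -> K,
    [/\ multilinear L, symmetric_form L & forall x : E, P x = L (fun _ => x)].

(* Main.v *)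
Require Import Defs.
From mathcomp Require Import all_boot all_order all_algebra all_fingroup.
From mathcomp Require Import all_classical all_reals all_analysis.
From mathcomp Require Import complex.
Import numFieldNormedType.Exports.
Local Open Scope classical_set_scope.
Local Open Scope ring_scope.

From mathcomp Require Import ring lra.
Import Order.TTheory GRing.Theory Num.Theory.


Lemma connected_add_closure (T : topologicalType) (A : set T) (w : T) :
  connected A -> closure A w -> connected (A `|` [set w]).
Proof.
move=> cA clw; apply: contrapT => /connectedPn [E [E0 EU sE]].
have AE : A `<=` E false `|` E true by rewrite -EU => x Ax; left.
have dis := separated_disjoint sE.
case: (connected_subset sE AE cA) => AEb.
- case: (E0 true) => x E1x.
  have : (A `|` [set w]) x by rewrite EU; right.
  case=> [Ax|xw].
    by move: dis; apply/eqP/set0P; exists x; split => //; exact: AEb.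
  have cl : closure (E false) w by exact: (closureS AEb).
  move: sE => [+ _]; apply/eqP/set0P; exists w; split => //.
  by rewrite -xw.
- case: (E0 false) => x E0x.
  have : (A `|` [set w]) x by rewrite EU; left.
  case=> [Ax|xw].
    by move: dis; apply/eqP/set0P; exists x; split => //; exact: AEb.
  have cl : closure (E true) w by exact: (closureS AEb).
  move: sE => [_ +]; apply/eqP/set0P; exists w; split => //.
  by rewrite -xw.
Qed.

Lemma not_connected_far (K : numFieldType) (S : set K^o) :
  S 0 -> (exists v, S v /\ v != 0) -> (forall v, S v -> v != 0 -> 1 <= `|v|) ->
  ~ connected S.
Proof.
move=> S0 [v [Sv v0]] Sfar; apply/connectedPn.
exists (fun b => if b then S `\` [set 0] else [set 0]); split.
- by case; [exists v; split => // /= /eqP; rewrite (negbTE v0)| exists 0].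
- apply/seteqP; split => x /=.
    by move=> Sx; have [->|x0] := eqVneq x 0; [left|right; split => // /eqP; rewrite (negbTE x0)].
  by case=> [->|[]].
- split.
  + apply/seteqP; split => // x [clx [Sx x0']].
    have x0 : x != 0 by apply/eqP.
    have := clx _ (nbhsx_ballx x 1 ltr01) => -[y [/= -> ]].
    rewrite -ball_normE /= subr0 => lt1.
    by have := le_lt_trans (Sfar _ Sx x0) lt1; rewrite ltxx.
  + apply/seteqP; split => // x [/= -> clx].
    have := clx _ (nbhsx_ballx 0 1 ltr01) => -[y [[Sy y0']]].
    have y0 : y != 0 by apply/eqP.
    rewrite -ball_normE /= sub0r normrN => lt1.
    by have := le_lt_trans (Sfar _ Sy y0) lt1; rewrite ltxx.
Qed.


Lemma key_disconnect (K : numFieldType) (E : normedModType K) (P : E -> K^o)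
  (T0 : topologicalType) (I : set T0) (g : T0 -> K) (i0 i1 : T0) (z : E) (Y : set E) :
  connected I -> I i0 -> I i1 -> g i0 = 0 -> g i1 = 1 -> continuous g -> P 0 = 0 ->
  (forall y, Y y -> forall r, I r -> 1 <= `|P (g r *: y + (1 - g r) *: z)|) ->
  (forall e : K, 0 < e -> exists y, Y y /\ `|y| < e) ->
  exists C : set E, connected C /\ ~ connected (P @` C).
Proof.
move=> cI Ii0 Ii1 g0 g1 cg P0 Hseg Hclos.
pose h (y : E) := fun r => g r *: y + (1 - g r) *: z.
have hz y : h y i0 = z by rewrite /h g0 scale0r add0r subr0 scale1r.
have hy y : h y i1 = y by rewrite /h g1 scale1r subrr scale0r addr0.
have ch y : continuous (h y).
  move=> x.
  have -> : h y = (fun r => g r *: y) + (fun r => (1 - g r) *: z) by [].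
  apply: continuousD.
    exact: continuousZr_tmp (cg x).
  apply: continuousZr_tmp.
  have -> : (fun r => 1 - g r) = (fun=> 1) - g by [].
  apply: cvgB; [exact: cvg_cst| exact: cg].
pose A := \bigcup_(y in Y) (h y @` I).
have cA : connected A.
  apply: bigcup_connected.
    by exists z => y _; exists i0 => //; rewrite hz.
  move=> y _; apply: connected_continuous_connected => //.
  exact: continuous_subspaceT.
have clA : closure A 0.
  move=> B /nbhs_ballP [e /= e0 eB].
  have [y [Yy ye]] := Hclos e e0.
  exists y; split; first by exists y => //; exists i1 => //; rewrite hy.
  by apply: eB; rewrite -ball_normE /= sub0r normrN.
exists (A `|` [set 0]); split; first exact: connected_add_closure.
apply: not_connected_far.
- by exists 0; [right|].
- have [y [Yy _]] := Hclos 1 ltr01.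
  exists (P y); split; first by exists y => //; left; exists y => //; exists i1 => //; rewrite hy.
  have := Hseg y Yy i1 Ii1; rewrite -/(h y i1) hy.
  by apply: contraTneq => ->; rewrite normr0 ler10.
- move=> v [x [[y Yy [r Ir <-]]|->] <-] v0.
    exact: Hseg.
  by rewrite P0 eqxx in v0.
Qed.


Lemma cont_of_lip (K : numFieldType) (E : normedModType K) (P : E -> K^o) (C : E -> K) :
  (forall x, 0 <= C x) ->
  (forall x y, `|x - y| <= 1 -> `|P x - P y| <= C x * `|x - y|) -> continuous P.
Proof.
move=> C0 HC x; apply/cvgrPdist_lt => e e0.
have C1 : 0 < C x + 1 by apply: ltr_wpDl.
have d0 : 0 < e / (C x + 1) by apply: divr_gt0.
have := filterI (nbhsx_ballx x 1 ltr01) (nbhsx_ballx x _ d0).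
move=> /(_ _); apply: filterS => y []; rewrite -!ball_normE /= => h1 h2.
apply: (le_lt_trans (HC x y (ltW h1))).
apply: (@le_lt_trans _ _ ((C x + 1) * `|x - y|)).
  by apply: ler_wpM2r => //; rewrite lerDl.
by rewrite -ltr_pdivlMl // mulrC.
Qed.

Lemma lin_cont (K : numFieldType) (E : normedModType K) (P : E -> K^o) (M : K) :
 (forall a u v, P (a *: u + v) = a * P u + P v) ->
 (forall y, `|y| <= 1 -> `|P y| <= M) -> continuous P.
Proof.
move=> Hl HM.
have P0 : P 0 = 0.
  have := Hl 1 0 0; rewrite scale1r addr0 mul1r => h.
  by apply: (addrI (P 0)); rewrite addr0 -h.
have PZ a u : P (a *: u) = a * P u by rewrite -[a *: u]addr0 Hl P0 addr0.
have M0 : 0 <= M by apply: le_trans (HM 0 _); rewrite ?normr0 ?ler01.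
have bd h : `|P h| <= M * `|h|.
  have [->|h0] := eqVneq h 0; first by rewrite P0 !normr0 mulr0.
  have n0 : 0 < `|h| by rewrite normr_gt0.
  have -> : P h = `|h| * P (`|h|^-1 *: h) by rewrite -PZ scalerA divff ?scale1r // gt_eqF.
  rewrite normrM normr_id.
  rewrite mulrC ler_wpM2r //; apply: HM.
  by rewrite normrZ normrV ?unitfE ?gt_eqF // normr_id mulVf ?gt_eqF.
apply: (@cont_of_lip _ _ _ (fun=> M)) => // x y _.
have := Hl 1 (x - y) y; rewrite scale1r mul1r subrK => ->.
by rewrite addrK.
Qed.

Set Implicit Arguments. Unset Strict Implicit. Unset Printing Implicit Defensive.

Section Alg.
Variables (K : numFieldType) (E : lmodType K).

Lemma hom1_lin (P : E -> K) : homogeneous_polynomial 1 P ->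
  forall a u v, P (a *: u + v) = a * P u + P v.
Proof.
move=> [L [ml _ PL]] a u v; rewrite !PL.
have e (w : E) : (fun _ : 'I_1 => w) = upd (fun _ => 0) ord0 w.
  by apply: funext => j; rewrite /upd (ord1 j) eqxx.
by rewrite (e (a *: u + v)) (e u) (e v) ml.
Qed.

Definition bil (B : E -> E -> K) :=
  (forall x y, B x y = B y x) /\ (forall a u v w, B (a *: u + v) w = a * B u w + B v w).

Lemma hom2_bil (P : E -> K) : homogeneous_polynomial 2 P ->
  exists B, bil B /\ forall x, P x = B x x.
Proof.
move=> [L [ml sy PL]].
exists (fun x y => L (fun j : 'I_2 => if j == ord0 then x else y)); split; last first.
  by move=> x; rewrite PL; congr L; apply: funext => j; case: ifP.
split.
  move=> x y; rewrite -(sy (tperm ord0 ord_max)); congr L; apply: funext => j.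
  by case: j => [[|[|//]]] /= lt; rewrite !permE /=.
move=> a u v w.
have e (t : E) : (fun j : 'I_2 => if j == ord0 then t else w) =
    upd (fun j : 'I_2 => if j == ord0 then 0 else w) ord0 t.
  by apply: funext => j; rewrite /upd; case: ifP.
by rewrite (e (a *: u + v)) (e u) (e v) ml.
Qed.

Section B.
Variables (B : E -> E -> K) (hB : bil B).

Lemma B0l w : B 0 w = 0.
Proof.
have := hB.2 1 0 0 w; rewrite scale1r addr0 mul1r.
by move=> h; apply: (addrI (B 0 w)); rewrite addr0 -h.
Qed.

Lemma Blin a b u v w : B (a *: u + b *: v) w = a * B u w + b * B v w.
Proof.
rewrite hB.2; congr (_ + _).
by rewrite -[b *: v]addr0 hB.2 B0l addr0.
Qed.

Lemma Blinr a b u v w : B w (a *: u + b *: v) = a * B w u + b * B w v.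
Proof. by rewrite hB.1 Blin !(hB.1 w). Qed.

Lemma Bexp a b c d u v w t :
  B (a *: u + b *: v) (c *: w + d *: t) =
  a * c * B u w + a * d * B u t + b * c * B v w + b * d * B v t.
Proof. rewrite Blin !Blinr; ring. Qed.

Lemma Bsc a u w : B (a *: u) w = a * B u w.
Proof. by rewrite -[a *: u]addr0 -[0 : E](scale0r u) Blin mul0r addr0. Qed.

Lemma Bscr a u w : B w (a *: u) = a * B w u.
Proof. by rewrite hB.1 Bsc hB.1. Qed.

Lemma Bquad a b u v :
  B (a *: u + b *: v) (a *: u + b *: v) =
  a ^+ 2 * B u u + 2 * a * b * B u v + b ^+ 2 * B v v.
Proof. rewrite Bexp (hB.1 v u); ring. Qed.

Lemma BN u w : B (- u) w = - B u w.
Proof. by rewrite -scaleN1r Bsc mulN1r. Qed.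

End B.
End Alg.


Lemma quad_cont (K : numFieldType) (E : normedModType K) (P : E -> K^o) (B : E -> E -> K)
  (hB : bil B) (PB : forall x, P x = B x x) (M : K) :
 (forall y, `|y| <= 1 -> `|P y| <= M) -> continuous P.
Proof.
move=> HM.
have M0 : 0 <= M by apply: le_trans (HM 0 _); rewrite ?normr0 ?ler01.
have B1 u v : `|u| <= 2^-1 -> `|v| <= 2^-1 -> `|4 * B u v| <= 2 * M.
  move=> hu hv.
  have e : 4 * B u v = P (1 *: u + 1 *: v) - P (1 *: u + (-1) *: v).
    rewrite !PB !(Bquad hB); ring.
  rewrite e !scale1r scaleN1r.
  have n1 : `|u + v| <= 1.
    by apply: le_trans (ler_normD _ _) _; rewrite [1](splitr 1) lerD // mul1r.
  have n2 : `|u - v| <= 1.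
    by apply: le_trans (ler_normB _ _) _; rewrite [1](splitr 1) lerD // mul1r.
  apply: le_trans (ler_normB _ _) _.
  by rewrite mulr2n mulrDl mul1r lerD // HM.
have Bb u v : `|B u v| <= 2 * M * `|u| * `|v|.
  have [->|u0] := eqVneq u 0.
    by rewrite (B0l hB) normr0 normr0 mulr0 mul0r.
  have [->|v0] := eqVneq v 0.
    by rewrite hB.1 (B0l hB) normr0 normr0 mulr0.
  have nu : 0 < `|u| by rewrite normr_gt0.
  have nv : 0 < `|v| by rewrite normr_gt0.
  have e : B u v = `|u| * `|v| * (4 * B ((2 * `|u|)^-1 *: u) ((2 * `|v|)^-1 *: v)).
    rewrite (Bsc hB) (Bscr hB).
    have h2 : (2 : K) != 0 by rewrite pnatr_eq0.
    field; rewrite ?gt_eqF //.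
  rewrite e normrM normrM !normr_id.
  rewrite [X in _ <= X]mulrC mulrA [X in _ <= X]mulrC mulrA.
  rewrite ler_wpM2l ?mulr_ge0 //.
  have hh (w : E) : w != 0 -> `|(2 * `|w|)^-1 *: w| <= 2^-1.
    move=> w0; rewrite normrZ normfV normrM normr_id ger0_norm ?ler0n //.
    by rewrite invfM -mulrA mulVf ?normr_eq0 // mulr1.
  by apply: B1; apply: hh.
apply: (@cont_of_lip _ _ _ (fun x => 4 * M * `|x| + 2 * M)).
  by move=> x; rewrite addr_ge0 // ?mulr_ge0 // ?ler0n.
move=> x y hxy.
have e : P x - P y = 2 * B x (x - y) - B (x - y) (x - y).
  have := PB (1 *: x + (-1) *: (x - y)).
  rewrite (Bquad hB) scale1r scaleN1r opprB addrC subrK => ->.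
  rewrite PB; ring.
rewrite e.
have nh : 0 <= `|x - y| by [].
apply: le_trans (ler_normB _ _) _.
rewrite normrM ger0_norm ?ler0n //.
apply: (@le_trans _ _ (2 * (2 * M * `|x| * `|x - y|) + 2 * M * `|x - y| * `|x - y|)).
  rewrite lerD // ler_wpM2l ?ler0n //.
rewrite (_ : (4 * M * `|x| + 2 * M) * `|x - y| =
  2 * (2 * M * `|x| * `|x - y|) + 2 * M * `|x - y|); last by ring.
rewrite lerD2l.
rewrite -mulrA ler_wpM2l ?mulr_ge0 ?ler0n //.
by rewrite -[X in _ <= X]mul1r ler_wpM2r.
Qed.


Section Gen.
Variables (K : numFieldType) (E : normedModType K) (P : E -> K^o).

Lemma unb_of (hc : forall M, (forall y, `|y| <= 1 -> `|P y| <= M) -> continuous P) :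
  ~ continuous P -> forall M, 0 < M -> exists y, `|y| <= 1 /\ M < `|P y|.
Proof.
move=> nc M M0; apply: contrapT => h; apply: nc; apply: (hc M) => y y1.
have Mr : M \is Num.real := gtr0_real M0.
rewrite (real_leNgt (normr_real _) Mr); apply/negP => lt.
by apply: h; exists y.
Qed.

Lemma lin_P0 (Hl : forall a u v, P (a *: u + v) = a * P u + P v) : P 0 = 0.
Proof.
have := Hl 1 0 0; rewrite scale1r addr0 mul1r => h.
by apply: (addrI (P 0)); rewrite addr0 -h.
Qed.

Lemma lin_2 (Hl : forall a u v, P (a *: u + v) = a * P u + P v) a b u v :
  P (a *: u + b *: v) = a * P u + b * P v.
Proof. by rewrite Hl -[b *: v]addr0 Hl lin_P0 // addr0. Qed.

Lemma lin_clos (Hl : forall a u v, P (a *: u + v) = a * P u + P v)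
  (unb : forall M, 0 < M -> exists y, `|y| <= 1 /\ M < `|P y|) :
  forall e : K, 0 < e -> exists y, `|y| < e /\ 2 <= P y.
Proof.
move=> e e0.
have h4 : 0 < 4 / e by rewrite divr_gt0 ?ltr0n.
have [y0 [y01 lt]] := unb (4 / e) h4.
have a0 : 0 < `|P y0| by apply: lt_trans lt; apply: divr_gt0.
have P0 : P y0 != 0 by rewrite -normr_gt0.
have e20 : 0 < e / 2 by apply: divr_gt0.
exists ((e / 2 * (`|P y0| / P y0)) *: y0); split.
  have hl : `|e / 2 * (`|P y0| / P y0)| = e / 2.
    by rewrite normrM (gtr0_norm e20) normrM normfV normr_id divff ?gt_eqF // mulr1.
  rewrite normrZ hl.
  apply: (@le_lt_trans _ _ (e / 2)).
    by rewrite -[X in _ <= X]mulr1 ler_wpM2l // ltW.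
  by rewrite ltr_pdivrMr // ltr_pMr // ltr1n.
rewrite -[_ *: y0]addr0 Hl lin_P0 // addr0 -(mulrA (e / 2)) divfK //.
have : e / 2 * (4 / e) < e / 2 * `|P y0| by rewrite ltr_pM2l.
have -> : e / 2 * (4 / e) = 2.
  have h2 : (2 : K) != 0 by rewrite pnatr_eq0.
  by field; rewrite gt_eqF.
exact: ltW.
Qed.
End Gen.


Lemma real_n1 (R : realType) (E : normedModType R) (P : E -> R^o) :
  homogeneous_polynomial 1 P ->
  (forall C : set E, connected C -> connected (P @` C)) -> continuous P.
Proof.
move=> hp D; have Hl := hom1_lin hp.
apply: contrapT => nc.
have unb := unb_of (fun M HM => @lin_cont _ _ P M Hl HM) nc.
have cl := lin_clos Hl unb.
have [z [_ z2]] := cl 1 ltr01.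
have [|||||||||C [cC ncC]] := @key_disconnect R E P R `[0, 1] id 0 1 z [set y | 2 <= P y].
- exact: segment_connected.
- by rewrite /= in_itv /= lexx ler01.
- by rewrite /= in_itv /= lexx ler01.
- by [].
- by [].
- by move=> x.
- exact: lin_P0 Hl.
- move=> y Yy r; rewrite /= in_itv /= => /andP [r0 r1].
  rewrite (lin_2 Hl); apply: le_trans (ler_norm _); rewrite /= in Yy; nra.
- by move=> e e0; have [y [ye y2]] := cl e e0; exists y.
exact: ncC (D C cC).
Qed.

Lemma real_n2 (R : realType) (E : normedModType R) (P : E -> R^o) :
  homogeneous_polynomial 2 P ->
  (forall C : set E, connected C -> connected (P @` C)) -> continuous P.
Proof.
move=> hp D; have [B [hB PB]] := hom2_bil hp.
apply: contrapT => nc.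
have unb := unb_of (fun M HM => @quad_cont _ _ P B hB PB M HM) nc.
have [s [s1 Hs]] : exists s : R, `|s| = 1 /\
    forall M, 0 < M -> exists y, `|y| <= 1 /\ M < s * P y.
  case: (pselect (forall M, 0 < M -> exists y, `|y| <= 1 /\ M < P y)) => [h|h].
    exists 1; split; first by rewrite normr1.
    by move=> M M0; have [y ?] := h M M0; exists y; rewrite mul1r.
  exists (-1); split; first by rewrite normrN normr1.
  move/existsNP: h => [M1 /not_implyP [M10 h1]].
  have hb y : `|y| <= 1 -> P y <= M1.
    move=> y1; rewrite leNgt; apply/negP => lt; apply: h1; by exists y.
  move=> M M0; have [y [y1 lt]] := unb (M + M1) (addr_gt0 M0 M10).
  exists y; split => //; have := hb y y1; rewrite mulN1r.
  by case: (lerP 0 (P y)) => h; [rewrite ger0_norm in lt|rewrite ltr0_norm in lt]; lra.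
have [z [_ z2]] := Hs 2 (ltr0Sn _ _).
have P0 : P 0 = 0 by rewrite PB (B0l hB).
have PN y : P (- y) = P y by rewrite !PB (BN hB) hB.1 (BN hB) opprK.
have [|||||||||C [cC ncC]] := @key_disconnect R E P R `[0, 1] id 0 1 z
   [set y | 2 <= s * P y /\ 0 <= s * B y z].
- exact: segment_connected.
- by rewrite /= in_itv /= lexx ler01.
- by rewrite /= in_itv /= lexx ler01.
- by [].
- by [].
- by move=> x.
- exact: P0.
- move=> y [Yy1 Yy2] r; rewrite /= in_itv /= => /andP [r0 r1].
  have hn (v : R) : s * v <= `|v| by rewrite -[`|v|]mul1r -s1 -normrM ler_norm.
  apply: le_trans (hn _).
  rewrite PB (Bquad hB) -!PB.
  have -> : s * (r ^+ 2 * P y + 2 * r * (1 - r) * B y z + (1 - r) ^+ 2 * P z) =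
     r ^+ 2 * (s * P y) + 2 * r * (1 - r) * (s * B y z) + (1 - r) ^+ 2 * (s * P z) by ring.
  move: Yy1 Yy2 z2; set a := s * P y; set b := s * B y z; set c := s * P z => ha hb hc.
  have h1 : r ^+ 2 * 2 <= r ^+ 2 * a by rewrite ler_wpM2l ?sqr_ge0.
  have h2 : 0 <= 2 * r * (1 - r) * b.
    by apply: mulr_ge0 => //; apply: mulr_ge0; [apply: mulr_ge0|]; lra.
  have h3 : (1 - r) ^+ 2 * 2 <= (1 - r) ^+ 2 * c by rewrite ler_wpM2l ?sqr_ge0 ?ltW.
  have h4 : 0 <= (2 * r - 1) ^+ 2 by rewrite sqr_ge0.
  nra.
- move=> e e0.
  have h8 : 0 < 8 / e ^+ 2 by rewrite divr_gt0 ?exprn_gt0.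
  have [y0 [y01 lt]] := Hs _ h8.
  pose y1 := (e / 2) *: y0.
  have ny1 : `|y1| < e.
    rewrite normrZ ger0_norm ?divr_ge0 ?ltW //.
    have : 0 <= `|y0| by [].
    nra.
  have Py1 : 2 <= s * P y1.
    rewrite /y1 PB (Bsc hB) (Bscr hB) -PB.
    have -> : s * (e / 2 * (e / 2 * P y0)) = (e / 2) ^+ 2 * (s * P y0) by ring.
    move: lt; rewrite ltr_pdivrMr ?exprn_gt0 //; nra.
  case: (lerP 0 (s * B y1 z)) => hs.
    by exists y1.
  exists (- y1); split; last by rewrite normrN.
  rewrite /= PN; split => //.
  by rewrite (BN hB); lra.
exact: ncC (D C cC).
Qed.


Lemma quad_clos_C (K : numClosedFieldType) (E : normedModType K) (P : E -> K^o)
  (B : E -> E -> K) (hB : bil B) (PB : forall x, P x = B x x)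
  (unb : forall M, 0 < M -> exists y, `|y| <= 1 /\ M < `|P y|) :
  forall e : K, 0 < e -> exists y, `|y| < e /\ 2 <= P y.
Proof.
move=> e e0.
have h8 : 0 < 8 / e ^+ 2 by rewrite divr_gt0 ?ltr0n ?exprn_gt0.
have [y0 [y01 lt]] := unb _ h8.
have a0 : 0 < `|P y0| by apply: lt_trans lt.
have P0 : P y0 != 0 by rewrite -normr_gt0.
have e20 : 0 < e / 2 by apply: divr_gt0.
set l := sqrtC (`|P y0| / P y0).
have l2 : l ^+ 2 = `|P y0| / P y0 by rewrite sqrtCK.
have nl : `|l| = 1.
  apply/eqP; rewrite -sqrp_eq1 // -normrX l2 normrM normfV normr_id divff //.
  by rewrite gt_eqF.
exists ((e / 2 * l) *: y0); split.
  rewrite normrZ normrM nl mulr1 (gtr0_norm e20).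
  apply: (@le_lt_trans _ _ (e / 2)).
    by rewrite -[X in _ <= X]mulr1 ler_wpM2l // ltW.
  by rewrite ltr_pdivrMr // ltr_pMr // ltr1n.
rewrite PB (Bsc hB) (Bscr hB) -PB.
have -> : e / 2 * l * (e / 2 * l * P y0) = (e / 2) ^+ 2 * (l ^+ 2 * P y0) by ring.
rewrite l2 divfK //.
have : (e / 2) ^+ 2 * (8 / e ^+ 2) < (e / 2) ^+ 2 * `|P y0| by rewrite ltr_pM2l ?exprn_gt0.
have -> : (e / 2) ^+ 2 * (8 / e ^+ 2) = 2.
  have h2 : (2 : K) != 0 by rewrite pnatr_eq0.
  by field; rewrite gt_eqF.
exact: ltW.
Qed.

Section Cx.
Variable R : realType.
Local Notation Rec := (@complex.Re R).
Lemma ReD (x y : R[i]) : Rec (x + y) = Rec x + Rec y. Proof. by case: x => a b; case: y. Qed.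
Lemma ReN (x : R[i]) : Rec (- x) = - Rec x. Proof. by case: x. Qed.
Lemma ReM (k : R) (w : R[i]) : Rec ((k%:C)%C * w) = k * Rec w.
Proof. case: w => a b /=. by rewrite mul0r subr0. Qed.
Lemma Re2 : Rec (2 : R[i]) = 2. Proof. by rewrite -[2]/(1 + 1 : R[i]) ReD. Qed.
Lemma normCR (k : R) : `|(k%:C)%C| = (`|k|%:C)%C.
Proof. by rewrite normc_def /= expr0n addr0 sqrtr_sqr. Qed.
Lemma le_Re (x y : R[i]) : x <= y -> Rec x <= Rec y. Proof. by rewrite lecE => /andP[]. Qed.
Lemma one_le_norm (v : R[i]) : 1 <= Rec v -> 1 <= `|v|.
Proof.
move=> h; apply: le_trans (normc_ge_Re v).
rewrite (_ : (1 : R[i]) = (1%:C)%C) // lecR.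
by apply: le_trans h (ler_norm _).
Qed.

Lemma rc_near (x : R) (e : R[i]) : 0 < e ->
  \forall y \near x, `|(x%:C)%C - (y%:C)%C| < e.
Proof.
case: e => a b; rewrite ltcE /= => /andP [/eqP b0 a0].
subst b.
apply: filterS (nbhsx_ballx x a a0) => y; rewrite -ball_normE /= => hy.
by rewrite -rmorphB normCR -complexr0 ltcR.
Qed.
End Cx.


Lemma cplx_n1 (R : realType) (E : normedModType R[i]) (P : E -> R[i]^o) :
  homogeneous_polynomial 1 P ->
  (forall C : set E, connected C -> connected (P @` C)) -> continuous P.
Proof.
move=> hp D; have Hl := hom1_lin hp.
apply: contrapT => nc.
have unb := unb_of (fun M HM => @lin_cont _ _ P M Hl HM) nc.
have cl := lin_clos Hl unb.
have [z [_ z2]] := cl 1 ltr01.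
have [|||||||||C [cC ncC]] := @key_disconnect R[i] E P R `[0, 1]
   (fun r => (r%:C)%C) 0 1 z [set y | 2 <= complex.Re (P y)].
- exact: segment_connected.
- by rewrite /= in_itv /= lexx ler01.
- by rewrite /= in_itv /= lexx ler01.
- by [].
- by [].
- by move=> x; apply/cvgrPdist_lt => e e0; exact: rc_near.
- exact: lin_P0 Hl.
- move=> y Yy r; rewrite /= in_itv /= => /andP [r0 r1].
  rewrite (lin_2 Hl); apply: one_le_norm.
  have z2' := le_Re z2; rewrite Re2 in z2'.
  have e1 : (1 - (r%:C)%C) = ((1 - r)%:C)%C :> R[i] by rewrite rmorphB rmorph1.
  rewrite e1 ReD !ReM; rewrite /= in Yy; nra.
- move=> e e0; have [y [ye y2]] := cl e e0; exists y; split => //.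
  by have := le_Re y2; rewrite Re2.
exact: ncC (D C cC).
Qed.

Lemma cplx_n2 (R : realType) (E : normedModType R[i]) (P : E -> R[i]^o) :
  homogeneous_polynomial 2 P ->
  (forall C : set E, connected C -> connected (P @` C)) -> continuous P.
Proof.
move=> hp D; have [B [hB PB]] := hom2_bil hp.
apply: contrapT => nc.
have unb := unb_of (fun M HM => @quad_cont _ _ P B hB PB M HM) nc.
have cq := quad_clos_C hB PB unb.
have [z [_ z2]] := cq 1 ltr01.
have P0 : P 0 = 0 by rewrite PB (B0l hB).
have PN y : P (- y) = P y by rewrite !PB (BN hB) hB.1 (BN hB) opprK.
have [|||||||||C [cC ncC]] := @key_disconnect R[i] E P R `[0, 1]
   (fun r => (r%:C)%C) 0 1 z
   [set y | 2 <= complex.Re (P y) /\ 0 <= complex.Re (B y z)].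
- exact: segment_connected.
- by rewrite /= in_itv /= lexx ler01.
- by rewrite /= in_itv /= lexx ler01.
- by [].
- by [].
- by move=> x; apply/cvgrPdist_lt => e e0; exact: rc_near.
- exact: P0.
- move=> y [Yy1 Yy2] r; rewrite /= in_itv /= => /andP [r0 r1].
  apply: one_le_norm.
  have z2' := le_Re z2; rewrite Re2 in z2'.
  rewrite PB (Bquad hB) -!PB.
  have e1 : (1 - (r%:C)%C) = ((1 - r)%:C)%C :> R[i] by rewrite rmorphB rmorph1.
  have e2 : 2 * (r%:C)%C * ((1 - r)%:C)%C = ((2 * r * (1 - r))%:C)%C :> R[i].
    by rewrite !rmorphM rmorph_nat.
  rewrite e1 e2 -!rmorphXn !ReD !ReM.
  move: Yy1 Yy2 z2'; set a := complex.Re (P y); set b := complex.Re (B y z);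
    set c := complex.Re (P z) => ha hb hc.
  have h1 : r ^+ 2 * 2 <= r ^+ 2 * a by rewrite ler_wpM2l ?sqr_ge0.
  have h2 : 0 <= 2 * r * (1 - r) * b.
    by apply: mulr_ge0 => //; apply: mulr_ge0; [apply: mulr_ge0|]; lra.
  have h3 : (1 - r) ^+ 2 * 2 <= (1 - r) ^+ 2 * c by rewrite ler_wpM2l ?sqr_ge0.
  have h4 : 0 <= (2 * r - 1) ^+ 2 by rewrite sqr_ge0.
  nra.
- move=> e e0; have [y1 [ye y2]] := cq e e0.
  have y2' := le_Re y2; rewrite Re2 in y2'.
  case: (lerP 0 (complex.Re (B y1 z))) => hs.
    by exists y1.
  exists (- y1); split; last by rewrite normrN.
  rewrite /= PN; split => //.
  by rewrite (BN hB) ReN; lra.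
exact: ncC (D C cC).
Qed.


Theorem proposition2p2 (R : realType) :
  (forall (E : normedModType R) (n : nat) (P : E -> R^o),
      (n = 1 \/ n = 2)%N -> homogeneous_polynomial n P ->
      (continuous P <-> forall C : set E, connected C -> connected (P @` C)))
  /\
  (forall (E : normedModType R[i]) (n : nat) (P : E -> R[i]^o),
      (n = 1 \/ n = 2)%N -> homogeneous_polynomial n P ->
      (continuous P <-> forall C : set E, connected C -> connected (P @` C))).
Proof.
split.
- move=> E n P hn hp; split.
    move=> cP C cC; apply: connected_continuous_connected => //.
    exact: continuous_subspaceT.
  by case: hn => ?; subst n; [exact: real_n1|exact: real_n2].
- move=> E n P hn hp; split.
    move=> cP C cC; apply: connected_continuous_connected => //.
    exact: continuous_subspaceT.
  by case: hn => ?; subst n; [exact: cplx_n1|exact: cplx_n2].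
Qed.
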